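(* Let $\Lambda\in\{\Lambda_G,\Lambda_U\}$ and assume there exist constants $c_{\mathrm{Fro}},C_{\mathrm{Fro}}>0$ such that $c_{\mathrm{Fro}}\|\mathbf{M}\|_{\mathrm{Fro}}\le\|\mathbf{M}\|_\Lambda\le C_{\mathrm{Fro}}\|\mathbf{M}\|_{\mathrm{Fro}}$ for all $\mathbf{M}\in S_d(\mathbb{R})$. Consider $E=(S_d(\mathbb{R}),\|\cdot\|_{\mathrm{Fro}})$, $F=(S_d(\mathbb{R}),\|\cdot\|_\Lambda)$, $\Omega$ the set of invertible symmetric matrices, $f=\operatorname{inv}:\boldsymbol\Theta\mapsto\boldsymbol\Theta^{-1}$, and $\mathfrak{X}=\mathfrak{S}^{-1}_{k,a,b}=\{\boldsymbol\Theta\in S_d^{++}(\mathbb{R}):\ \|\boldsymbol\Theta\|_0\le d+2k,\ \operatorname{spec}(\boldsymbol\Theta)\subseteq[a,b]\}$ with $0<a\le b$. Then on $\mathfrak{X}$, $f$ is $(\alpha,\beta)$-bi-Lipschitz, i.e. $\alpha\|\boldsymbol\Theta_1-\boldsymbol\Theta_2\|_{\mathrm{Fro}}\le\|\boldsymbol\Theta_1^{-1}-\boldsymbol\Theta_2^{-1}\|_\Lambda\le\beta\|\boldsymbol\Theta_1-\boldsymbol\Theta_2\|_{\mathrm{Fro}}$ for all $\boldsymbol\Theta_1,\boldsymbol\Theta_2\in\mathfrak{X}$; it satisfies $\|f(\boldsymbol\Theta_1)-f(\boldsymbol\Theta_2)-\mathrm{D}f_{\boldsymbol\Theta_2}(\boldsymbol\Theta_1-\boldsymbol\Theta_2)\|_\Lambda\le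 L\|\boldsymbol\Theta_1-\boldsymbol\Theta_2\|_{\mathrm{Fro}}^2$ and $\|\mathrm{D}f_{\boldsymbol\Theta_1}-\mathrm{D}f_{\boldsymbol\Theta_2}\|_{\mathrm{op}}\le\zeta\|\boldsymbol\Theta_1-\boldsymbol\Theta_2\|_{\mathrm{Fro}}$ for all $\boldsymbol\Theta_1,\boldsymbol\Theta_2\in\mathfrak{X}$; with $$\alpha=\frac{c_{\mathrm{Fro}}}{b^2},\quad\beta=\frac{C_{\mathrm{Fro}}}{a^2},\quad L=\frac{C_{\mathrm{Fro}}}{a^3},\quad\zeta=2L.$$
   Context: $S_d(\mathbb{R})$: real symmetric $d\times d$ matrices; $S_d^{++}(\mathbb{R})$: symmetric positive definite ones; $\|\mathbf{M}\|_0$: number of nonzero entries; $\operatorname{spec}$: spectrum. $\Lambda_G=\mathcal{N}(0,\frac1d\mathbf{I}_d)$, $\Lambda_U$ the uniform distribution on $\mathbb{S}^{d-1}$, and $\|\mathbf{M}\|_\Lambda=\mathbb{E}_{\mathbf{a}\sim\Lambda}[|\mathbf{a}^\top\mathbf{M}\mathbf{a}|]$. $\mathrm{D}f_{\boldsymbol\Theta}$ is the differential of the matrix inverse at $\boldsymbol\Theta$, i.e. $\mathbf{H}\mapsto-\boldsymbol\Theta^{-1}\mathbf{H}\boldsymbol\Theta^{-1}$, and $\|T\|_{\mathrm{op}}=\sup_{\|\mathbf{H}\|_{\mathrm{Fro}}\le1}\|T(\mathbf{H})\|_\Lambda$. *)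

(* Defs.v *)
From HB Require Import structures.
From mathcomp Require Import all_boot all_order all_algebra.
From mathcomp Require Import all_classical all_reals all_analysis.
Set Implicit Arguments. Unset Strict Implicit. Unset Printing Implicit Defensive.
Import Order.TTheory GRing.Theory Num.Theory.
Local Open Scope ring_scope.
Local Open Scope classical_set_scope.

Section defs.
Context {R : realType}.

Definition symmx (d : nat) (M : 'M[R]_d) : Prop := M^T = M.

Definition fro (d : nat) (M : 'M[R]_d) : R :=
  Num.sqrt (\sum_(i < d) \sum_(j < d) M i j ^+ 2).

Definition nnz (d : nat) (M : 'M[R]_d) : nat :=
  #|[set ij : 'I_d * 'I_d | M ij.1 ij.2 != 0]|.

Definition quadform (d : nat) (M : 'M[R]_d) (a : 'I_d -> R) : R :=
  \sum_(i < d) \sum_(j < d) a i * M i j * a j.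

Definition spd (d : nat) (M : 'M[R]_d) : Prop :=
  symmx M /\ forall v : 'cV[R]_d, v != 0 -> 0 < (v^T *m M *m v) 0 0.

Definition spec_in (d : nat) (M : 'M[R]_d) (a b : R) : Prop :=
  forall l : R, eigenvalue M l -> a <= l <= b.

Definition frakS (d k : nat) (a b : R) (M : 'M[R]_d) : Prop :=
  spd M /\ (nnz M <= d + 2 * k)%N /\ spec_in M a b.

Definition Dinv (d : nat) (Th H : 'M[R]_d) : 'M[R]_d :=
  - (invmx Th *m H *m invmx Th).

Context {dT : measure_display} {T : measurableType dT} (P : probability T R).

(* Lambda_G: the vector (X_0,...,X_{d-1}) has i.i.d. N(0, 1/d) coordinates
   (normal_prob m s has standard deviation s). *)
Definition isLambdaG (d : nat) (X : 'I_d -> {RV P >-> R}) : Prop :=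
  (forall i (B : set R), measurable B ->
      P (X i @^-1` B) = normal_prob 0 (Num.sqrt (d%:R^-1)) B) /\
  (forall B : 'I_d -> set R, (forall i, measurable (B i)) ->
      P (\bigcap_(i in [set: 'I_d]) (X i @^-1` B i)) =
      (\prod_(i < d) P (X i @^-1` B i))%E).

(* Lambda_U: uniform on the sphere, realised as a normalised Gaussian vector *)
Definition isLambdaU (d : nat) (Y : 'I_d -> {RV P >-> R}) : Prop :=
  exists X : 'I_d -> {RV P >-> R}, isLambdaG X /\
    forall t i, Y i t = X i t / Num.sqrt (\sum_(j < d) X j t ^+ 2).

(* ||M||_Lambda = E_{a ~ Lambda} |a^T M a|, where a = (Y_i)_i has law Lambda *)
Definition normL (d : nat) (Y : 'I_d -> {RV P >-> R}) (M : 'M[R]_d) : \bar R :=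
  (\int[P]_t `| quadform M (fun i => Y i t) |%:E)%E.

Definition opnormL (d : nat) (Y : 'I_d -> {RV P >-> R})
    (Tm : 'M[R]_d -> 'M[R]_d) : \bar R :=
  ereal_sup [set normL Y (Tm H) | H in [set H : 'M[R]_d | symmx H /\ fro H <= 1]].

End defs.

(* Main.v *)
Require Import Defs.
From HB Require Import structures.
From mathcomp Require Import all_boot all_order all_algebra.
From mathcomp Require Import all_classical all_reals all_analysis.
From mathcomp Require Import ring lra.
Import Order.TTheory GRing.Theory Num.Theory.
Local Open Scope ring_scope.
Local Open Scope classical_set_scope.
Set Implicit Arguments. Unset Strict Implicit. Unset Printing Implicit Defensive.

Section S.
Variable R : realType.
Definition nv n (v : 'rV[R]_n) := \sum_i v 0 i ^+ 2.
Definition bil n (M : 'M[R]_n) (u v : 'rV[R]_n) := (u *m M *m v^T) 0 0.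

Lemma tr00 (A : 'M[R]_1) : A 0 0 = A^T 0 0.
Proof. by rewrite mxE. Qed.

Lemma mx00D (A B : 'M[R]_1) : (A + B) 0 0 = A 0 0 + B 0 0.
Proof. by rewrite mxE. Qed.
Lemma mx00Z t (A : 'M[R]_1) : (t *: A) 0 0 = t * A 0 0.
Proof. by rewrite mxE. Qed.

Lemma mx00B (A B : 'M[R]_1) : (A - B) 0 0 = A 0 0 - B 0 0.
Proof. by rewrite !mxE. Qed.

Lemma bil_sym n (M : 'M[R]_n) u v : M^T = M -> bil M u v = bil M v u.
Proof.
move=> sM; rewrite /bil.
rewrite [LHS]tr00.
by rewrite !trmx_mul trmxK sM mulmxA.
Qed.

Lemma bil_exp n (M : 'M[R]_n) u v t : M^T = M ->
  bil M (u + t *: v) (u + t *: v) = bil M u u + 2 * t * bil M u v + t ^+ 2 * bil M v v.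
Proof.
move=> sM; rewrite /bil linearD linearZ /= !mulmxDl !mulmxDr -?scalemxAr -?scalemxAl -?scalemxAr -?scalemxAl !(mx00D, mx00Z).
have := bil_sym u v sM; rewrite /bil => ->.
ring.
Qed.

Lemma real_cs (A B C : R) : 0 <= C -> (forall t, 0 <= A + 2 * t * B + t ^+ 2 * C) -> B ^+ 2 <= A * C.
Proof.
move=> C0 H; have A0 : 0 <= A by have := H 0; rewrite expr2 !mulr0 !mul0r !addr0.
have [Ce|Cp] := eqVneq C 0.
  rewrite Ce; have [B0|Bn] := eqVneq B 0; first by rewrite B0 expr0n mulr0.
  have := H (- (A + 1) / (2 * B)).
  rewrite Ce mulr0 addr0.
  have -> : A + 2 * (- (A + 1) / (2 * B)) * B = -1 by field.
  by rewrite ler0N1.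
have Cp' : 0 < C by rewrite lt_def Cp C0.
have := H (- B / C).
have -> : A + 2 * (- B / C) * B + (- B / C) ^+ 2 * C = A - B ^+ 2 / C.
  by field.
rewrite subr_ge0 ler_pdivrMr //.
Qed.

Definition fro2 n (M : 'M[R]_n) := \sum_i \sum_j M i j ^+ 2.
Definition Kb n (M : 'M[R]_n) := \sum_j \sum_i `|M i j|.

Lemma bilE n (M : 'M[R]_n) u v :
  bil M u v = \sum_j \sum_i u 0 i * M i j * v 0 j.
Proof.
rewrite /bil mxE; apply: eq_bigr => j _; rewrite mxE big_distrl /=.
by apply: eq_bigr => i _; rewrite !mxE.
Qed.

Lemma nvE n (v : 'rV[R]_n) : nv v = bil 1%:M v v.
Proof. by rewrite /bil mulmx1 mxE /nv; apply: eq_bigr => i _; rewrite mxE expr2. Qed.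

Lemma nv_ge0 n (v : 'rV[R]_n) : 0 <= nv v.
Proof. by apply: sumr_ge0 => i _; apply: sqr_ge0. Qed.

Lemma nv_coord n (v : 'rV[R]_n) i : v 0 i ^+ 2 <= nv v.
Proof.
rewrite /nv (bigD1 i) //= lerDl; apply: sumr_ge0 => j _; exact: sqr_ge0.
Qed.

Lemma nv_gt0 n (v : 'rV[R]_n) : v != 0 -> 0 < nv v.
Proof.
move=> v0; rewrite lt_def nv_ge0 andbT; apply: contra v0 => /eqP.
rewrite /nv => /psumr_eq0P h; apply/eqP/rowP => i; rewrite mxE.
have := h (fun i _ => sqr_ge0 _) i isT => /eqP; rewrite sqrf_eq0 => /eqP.
by [].
Qed.

Lemma bil_bound n (M : 'M[R]_n) w : `|bil M w w| <= Kb M * nv w.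
Proof.
rewrite bilE /Kb big_distrl /=; apply: (le_trans (ler_norm_sum _ _ _)).
apply: ler_sum => j _; rewrite big_distrl /=.
apply: (le_trans (ler_norm_sum _ _ _)); apply: ler_sum => i _.
rewrite !normrM -mulrA mulrCA ler_wpM2l //.
have hi := nv_coord w i; have hj := nv_coord w j.
rewrite -(real_normK (num_real (w 0 i))) in hi.
rewrite -(real_normK (num_real (w 0 j))) in hj.
set x := `|w 0 i| in hi *; set y := `|w 0 j| in hj *.
have h2 : 0 <= (x - y) ^+ 2 := sqr_ge0 _.
rewrite sqrrB in h2.
set p := x ^+ 2 in hi h2 *. set q := y ^+ 2 in hj h2 *. set r := x * y in h2 *.
rewrite mulr2n in h2. lra.
Qed.

Lemma cs_psd n (M : 'M[R]_n) : M^T = M -> (forall v, 0 <= bil M v v) ->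
  forall u v, bil M u v ^+ 2 <= bil M u u * bil M v v.
Proof.
move=> sM psd u v; apply: real_cs => // t.
by rewrite -bil_exp.
Qed.

Lemma cs_vec n (u w : 'rV[R]_n) : (\sum_j u 0 j * w 0 j) ^+ 2 <= nv u * nv w.
Proof.
have -> : \sum_j u 0 j * w 0 j = bil 1%:M u w.
  rewrite /bil mulmx1 mxE; apply: eq_bigr => j _; by rewrite mxE.
rewrite !nvE; apply: cs_psd; first by rewrite tr_scalar_mx.
by move=> v; rewrite -nvE nv_ge0.
Qed.

Lemma nv_mul n (u : 'rV[R]_n) (A : 'M[R]_n) : nv (u *m A) <= nv u * fro2 A.
Proof.
rewrite /fro2 exchange_big /= mulr_sumr /nv; apply: ler_sum => k _.
rewrite mxE; have h := cs_vec u (\row_j A j k).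
have e1 : \sum_j u 0 j * (\row_j A j k) 0 j = \sum_j u 0 j * A j k.
  by apply: eq_bigr => j _; rewrite mxE.
have e2 : nv (\row_j A j k) = \sum_j A j k ^+ 2.
  by apply: eq_bigr => j _; rewrite mxE.
by rewrite e1 e2 in h.
Qed.

Lemma fro2_rows n (M : 'M[R]_n) : fro2 M = \sum_i nv (row i M).
Proof. by apply: eq_bigr => i _; apply: eq_bigr => j _; rewrite mxE. Qed.

Lemma fro2_ge0 n (M : 'M[R]_n) : 0 <= fro2 M.
Proof. by rewrite fro2_rows; apply: sumr_ge0 => i _; apply: nv_ge0. Qed.

Lemma fro2_tr n (M : 'M[R]_n) : fro2 M^T = fro2 M.
Proof.
rewrite /fro2 exchange_big /=; apply: eq_bigr => i _; apply: eq_bigr => j _.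
by rewrite mxE.
Qed.

Lemma fro2_opp n (M : 'M[R]_n) : fro2 (- M) = fro2 M.
Proof.
by apply: eq_bigr => i _; apply: eq_bigr => j _; rewrite mxE sqrrN.
Qed.

Lemma fro2_add n (X Y : 'M[R]_n) : fro2 (X + Y) <= 2 * fro2 X + 2 * fro2 Y.
Proof.
rewrite /fro2 !mulr_sumr -big_split /=; apply: ler_sum => i _.
rewrite !mulr_sumr -big_split /=; apply: ler_sum => j _.
rewrite mxE; set x := X i j; set y := Y i j.
have h : 0 <= (x - y) ^+ 2 := sqr_ge0 _.
rewrite sqrrB sqrrD in h *. rewrite mulr2n in h *.
set p := x ^+ 2 in h *. set q := y ^+ 2 in h *. set r := x * y in h *.
lra.
Qed.

Lemma fro2_mulr n (X A : 'M[R]_n) c : (forall u, nv (u *m A) <= c * nv u) ->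
  fro2 (X *m A) <= c * fro2 X.
Proof.
move=> h; rewrite !fro2_rows mulr_sumr; apply: ler_sum => i _.
by rewrite row_mul.
Qed.

Lemma fro2_mulr_ge n (X A : 'M[R]_n) c : (forall u, c * nv u <= nv (u *m A)) ->
  c * fro2 X <= fro2 (X *m A).
Proof.
move=> h; rewrite !fro2_rows mulr_sumr; apply: ler_sum => i _.
by rewrite row_mul.
Qed.

Lemma fro2_mul n (X Y : 'M[R]_n) : fro2 (X *m Y) <= fro2 X * fro2 Y.
Proof.
rewrite [fro2 (X *m Y)]fro2_rows [fro2 X]fro2_rows big_distrl /=; apply: ler_sum => i _.
by rewrite row_mul; apply: nv_mul.
Qed.

Lemma fro2_mull n (X A : 'M[R]_n) c : A^T = A -> (forall u, nv (u *m A) <= c * nv u) ->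
  fro2 (A *m X) <= c * fro2 X.
Proof.
move=> sA h; rewrite -[fro2 (A *m X)]fro2_tr trmx_mul sA -(fro2_tr X); exact: fro2_mulr.
Qed.

Lemma fro2_mull_ge n (X A : 'M[R]_n) c : A^T = A -> (forall u, c * nv u <= nv (u *m A)) ->
  c * fro2 X <= fro2 (A *m X).
Proof.
move=> sA h; rewrite -[fro2 (A *m X)]fro2_tr trmx_mul sA -(fro2_tr X); exact: fro2_mulr_ge.
Qed.

Lemma bil0 n (M : 'M[R]_n) : bil M 0 0 = 0.
Proof. by rewrite /bil !mul0mx mxE. Qed.

Lemma nv0 n : nv (0 : 'rV[R]_n) = 0.
Proof. by rewrite /nv big1 // => i _; rewrite mxE expr0n. Qed.

Lemma bil_scal n (M : 'M[R]_n) (mu : R) w : bil (M - mu%:M) w w = bil M w w - mu * nv w.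
Proof.
rewrite /bil mulmxBr mulmxBl mul_mx_scalar -scalemxAl mx00B mx00Z.
by rewrite nvE /bil mulmx1.
Qed.

Lemma spec_lb n (M : 'M[R]_n) c : M^T = M ->
  (forall l, eigenvalue M l -> c <= l) -> forall v, c * nv v <= bil M v v.
Proof.
move=> sM Hl v; have [->|v0] := eqVneq v 0; first by rewrite nv0 bil0 mulr0.
pose S := [set x : R | exists2 w, w != 0 & x = bil M w w / nv w]%classic.
have lbS : lbound S (- Kb M).
  move=> x [w w0 ->]; rewrite ler_pdivlMr ?nv_gt0 // mulNr lerNl.
  apply: le_trans (bil_bound M w); rewrite -normrN; exact: ler_norm.
have neS : S (bil M v v / nv v) by exists v.
have hinf : has_inf S by split; [exists (bil M v v / nv v) | exists (- Kb M)].
pose mu := inf S.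
have muS : forall w, mu * nv w <= bil M w w.
  move=> w; have [->|w0] := eqVneq w 0; first by rewrite nv0 bil0 mulr0.
  rewrite -ler_pdivlMr ?nv_gt0 //; apply: ge_inf; first by exists (- Kb M).
  by exists w.
pose N := M - mu%:M.
have psdN : forall w, 0 <= bil N w w by move=> w; rewrite bil_scal subr_ge0.
have sN : N^T = N by rewrite /N linearB /= tr_scalar_mx sM.
have Nsing : N \notin unitmx.
  apply/negP => Nu.
  pose K1 := Kb N; pose K2 := fro2 (invmx N).
  have K10 : 0 <= K1 by apply: sumr_ge0 => j _; apply: sumr_ge0 => i _.
  have K20 : 0 <= K2 by apply: fro2_ge0.
  pose e := (K1 * K2 + 1)^-1.
  have e0 : 0 < e by rewrite invr_gt0; apply: ltr_pwDr => //; apply: mulr_ge0.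
  have [x [w w0 ->] xlt] := inf_adherent e0 hinf.
  have qlt : bil N w w < e * nv w.
    rewrite /N bil_scal ltrBlDr -mulrDl -ltr_pdivrMr ?nv_gt0 // addrC; exact: xlt.
  pose z := w *m N.
  have bz : bil N z w = nv z.
    by rewrite nvE /bil mulmx1 trmx_mul sN /z mulmxA.
  have cs := cs_psd sN psdN z w; rewrite bz in cs.
  have b1 : bil N z z <= K1 * nv z.
    by apply: le_trans (ler_norm _) (bil_bound _ _).
  have h1 : nv z <= K1 * bil N w w.
    have [z0|zp] := eqVneq (nv z) 0.
      by rewrite z0; apply: mulr_ge0.
    have zpos : 0 < nv z by rewrite lt_def zp nv_ge0.
    rewrite -(ler_pM2r zpos) -expr2; apply: (le_trans cs); rewrite mulrAC.
    by apply: ler_wpM2r; [exact: psdN | exact: b1].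
  have h2 : nv w <= nv z * K2.
    by have := nv_mul z (invmx N); rewrite /z -mulmxA mulmxV // mulmx1.
  have h3 : nv w < nv w.
    apply: (le_lt_trans h2).
    apply: (le_lt_trans (y := (K1 * bil N w w) * K2)); first by rewrite ler_wpM2r.
    apply: (le_lt_trans (y := (K1 * K2) * (e * nv w))).
      by rewrite mulrAC ler_wpM2l ?mulr_ge0 // ltW.
    rewrite mulrA gtr_pMl ?nv_gt0 // /e.
    rewrite ltr_pdivrMr ?mul1r ?ltrDl //.
    by apply: ltr_pwDr => //; apply: mulr_ge0.
  by rewrite ltxx in h3.
have [u u0 uN] : exists2 u : 'rV[R]_n, u != 0 & u *m N = 0.
  by apply/det0P; rewrite unitmxE unitfE negbK in Nsing.
have : eigenvalue M mu.
  apply/eigenvalueP; exists u => //.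
  by move: uN; rewrite /N mulmxBr mul_mx_scalar => /eqP; rewrite subr_eq0 => /eqP.
move=> /Hl cmu; apply: le_trans (muS v).
by apply: ler_wpM2r; [exact: nv_ge0 | exact: cmu].
Qed.

Lemma eig_opp n (A : 'M[R]_n) l : eigenvalue (- A) l -> eigenvalue A (- l).
Proof.
move=> /eigenvalueP [v vA v0]; apply/eigenvalueP; exists v => //.
by move: vA; rewrite mulmxN scaleNr => /eqP; rewrite eqr_oppLR => /eqP.
Qed.

Lemma bil_opp n (A : 'M[R]_n) v : bil (- A) v v = - bil A v v.
Proof. by rewrite /bil mulmxN mulNmx mxE. Qed.

Section Theta.
Variables (n : nat) (Th : 'M[R]_n) (a b : R).
Hypotheses (sTh : Th^T = Th) (a0 : 0 < a) (ab : a <= b)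
  (spec : forall l, eigenvalue Th l -> a <= l <= b).

Lemma nvTh v : nv (v *m Th) = bil (Th *m Th) v v.
Proof. by rewrite nvE /bil mulmx1 trmx_mul sTh !mulmxA. Qed.

Lemma eig_sq l : eigenvalue (Th *m Th) l -> a ^+ 2 <= l <= b ^+ 2.
Proof.
move=> /eigenvalueP [v vA v0].
have l0 : 0 <= l.
  have : bil (Th *m Th) v v = l * nv v.
    by rewrite /bil vA -scalemxAl mxE nvE /bil mulmx1.
  rewrite -nvTh => e.
  have := nv_ge0 (v *m Th); rewrite e pmulr_lge0 // nv_gt0 //.
pose s := Num.sqrt l.
have s0 : 0 <= s by apply: sqrtr_ge0.
have ss : s * s = l by rewrite -expr2 sqr_sqrtr.
pose w := v *m Th - s *: v.
have wTh : w *m Th = - s *: w.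
  apply/eqP; rewrite -subr_eq0 /w mulmxBl -scalemxAl -mulmxA vA.
  apply/eqP; rewrite scalerBr scalerA -ss. 
  rewrite mulNr !scaleNr; set A := (s * s) *: v; set B := s *: (v *m Th).
  by rewrite opprK opprD opprK addrA subrK subrr.
have [w0|wn0] := eqVneq w 0.
  have : eigenvalue Th s.
    apply/eigenvalueP; exists v => //; apply/eqP; rewrite -subr_eq0.
    by rewrite -/w w0.
  move=> /spec /andP [aS sb].
  rewrite -ss -!expr2 ler_pXn2r ?nnegrE ?(ltW a0) // ?(le_trans (ltW a0) aS) //.
  rewrite ler_pXn2r ?nnegrE ?(le_trans (ltW a0) aS) ?(le_trans (ltW a0) (le_trans aS sb)) //.
  by rewrite aS sb.
have : eigenvalue Th (- s) by apply/eigenvalueP; exists w.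
move=> /spec /andP [aS _].
have : a <= 0 by apply: le_trans aS _; rewrite oppr_le0.
by rewrite leNgt a0.
Qed.

Lemma Th_lb v : a ^+ 2 * nv v <= nv (v *m Th).
Proof.
rewrite nvTh; apply: spec_lb; first by rewrite trmx_mul sTh.
by move=> l /eig_sq /andP [].
Qed.

Lemma Th_ub v : nv (v *m Th) <= b ^+ 2 * nv v.
Proof.
rewrite nvTh -(opprK (bil _ v v)) -bil_opp lerNl -mulNr.
apply: spec_lb; first by rewrite linearN /= trmx_mul sTh.
by move=> l /eig_opp /eig_sq /andP [_]; rewrite lerNl.
Qed.

Lemma Th_unit : Th \in unitmx.
Proof.
apply/negPn/negP => Nu.
have [u u0 uN] : exists2 u : 'rV[R]_n, u != 0 & u *m Th = 0.
  by apply/det0P; rewrite unitmxE unitfE negbK in Nu.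
have := Th_lb u; rewrite uN nv0 => h.
have := nv_gt0 u0; have : 0 < a ^+ 2 by rewrite exprn_gt0.
move=> ha hu; have := mulr_gt0 ha hu; by rewrite ltNge h.
Qed.

Lemma inv_sym : (invmx Th)^T = invmx Th.
Proof. by rewrite trmx_inv sTh. Qed.

Lemma inv_ub u : nv (u *m invmx Th) <= (a ^+ 2)^-1 * nv u.
Proof.
have := Th_lb (u *m invmx Th); rewrite -mulmxA mulVmx ?Th_unit // mulmx1.
by rewrite mulrC -ler_pdivlMr ?exprn_gt0 // mulrC.
Qed.

Lemma inv_lb u : (b ^+ 2)^-1 * nv u <= nv (u *m invmx Th).
Proof.
have b0 : 0 < b.
  exact: lt_le_trans a0 ab.
have := Th_ub (u *m invmx Th); rewrite -mulmxA mulVmx ?Th_unit // mulmx1.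
by rewrite mulrC -ler_pdivrMr ?exprn_gt0 // mulrC.
Qed.
End Theta.

Lemma fro2_sand n (A B X : 'M[R]_n) cA cB : A^T = A -> 0 <= cB ->
  (forall u, nv (u *m A) <= cA * nv u) -> (forall u, nv (u *m B) <= cB * nv u) ->
  fro2 (A *m X *m B) <= cA * cB * fro2 X.
Proof.
move=> sA cB0 hA hB; apply: le_trans (fro2_mulr _ hB) _.
rewrite mulrAC [_ * cB]mulrC; apply: (ler_wpM2l cB0); exact: fro2_mull.
Qed.

Lemma fro2_sand_ge n (A B X : 'M[R]_n) cA cB : A^T = A -> 0 <= cB ->
  (forall u, cA * nv u <= nv (u *m A)) -> (forall u, cB * nv u <= nv (u *m B)) ->
  cA * cB * fro2 X <= fro2 (A *m X *m B).
Proof.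
move=> sA cB0 hA hB; apply: le_trans _ (fro2_mulr_ge _ hB).
rewrite mulrAC [_ * cB]mulrC; apply: (ler_wpM2l cB0); exact: fro2_mull_ge.
Qed.

Lemma sqrt_le_mul (x y c : R) : 0 <= c -> 0 <= y -> x <= c ^+ 2 * y ->
  Num.sqrt x <= c * Num.sqrt y.
Proof.
move=> c0 y0 h; rewrite -[c in c * _](ger0_norm c0) -sqrtr_sqr -sqrtrM ?sqr_ge0 //.
exact: ler_wsqrtr h.
Qed.

Lemma sqrt_ge_mul (x y c : R) : 0 <= c -> 0 <= y -> c ^+ 2 * y <= x ->
  c * Num.sqrt y <= Num.sqrt x.
Proof.
move=> c0 y0 h; rewrite -[c in c * _](ger0_norm c0) -sqrtr_sqr -sqrtrM ?sqr_ge0 //.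
exact: ler_wsqrtr h.
Qed.
Lemma sym_sub n (X Y : 'M[R]_n) : X^T = X -> Y^T = Y -> (X - Y)^T = X - Y.
Proof. by move=> sX sY; rewrite linearB /= sX sY. Qed.
Lemma sym_opp n (X : 'M[R]_n) : X^T = X -> (- X)^T = - X.
Proof. by move=> sX; rewrite linearN /= sX. Qed.
Lemma sym_sand n (A X : 'M[R]_n) : A^T = A -> X^T = X -> (A *m X *m A)^T = A *m X *m A.
Proof. by move=> sA sX; rewrite !trmx_mul sA sX mulmxA. Qed.
End S.

Unset Implicit Arguments.
Unset Strict Implicit.

Theorem lemma1 (R : realType) (dT : measure_display) (T : measurableType dT)
  (P : probability T R) (d k : nat) (Y : 'I_d -> {RV P >-> R})
  (cF CF a b : R) :
  (isLambdaG Y \/ isLambdaU Y) ->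
  0 < cF -> 0 < CF ->
  (forall M : 'M[R]_d, symmx M ->
     ((cF * fro M)%:E <= normL Y M)%E /\ (normL Y M <= (CF * fro M)%:E)%E) ->
  0 < a -> a <= b ->
  let alpha := cF / b ^+ 2 in
  let beta := CF / a ^+ 2 in
  let L := CF / a ^+ 3 in
  let zeta := 2 * L in
  forall Th1 Th2 : 'M[R]_d, frakS k a b Th1 -> frakS k a b Th2 ->
    [/\ ((alpha * fro (Th1 - Th2))%:E <= normL Y (invmx Th1 - invmx Th2)%R)%E,
        (normL Y (invmx Th1 - invmx Th2)%R <= (beta * fro (Th1 - Th2))%:E)%E,
        (normL Y (invmx Th1 - invmx Th2 - Dinv Th2 (Th1 - Th2))%R
           <= (L * fro (Th1 - Th2) ^+ 2)%:E)%E &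
        (opnormL Y (fun H => (Dinv Th1 H - Dinv Th2 H)%R)
           <= (zeta * fro (Th1 - Th2))%:E)%E].
Proof.
move=> _ cF0 CF0 Hn a0 ab alpha beta L zeta Th1 Th2 [[s1 _] [_ sp1]] [[s2 _] [_ sp2]].
rewrite /symmx in s1 s2.
have b0 : 0 < b := lt_le_trans a0 ab.
pose I1 := invmx Th1; pose I2 := invmx Th2; pose H := Th1 - Th2.
have u1 : Th1 \in unitmx := Th_unit s1 a0 sp1.
have u2 : Th2 \in unitmx := Th_unit s2 a0 sp2.
have sI1 : I1^T = I1 := inv_sym s1.
have sI2 : I2^T = I2 := inv_sym s2.
have ub1 := inv_ub s1 a0 sp1; have ub2 := inv_ub s2 a0 sp2.
have lb1 := inv_lb s1 a0 ab sp1; have lb2 := inv_lb s2 a0 ab sp2.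
have ca0 : 0 <= a ^- 2 by rewrite invr_ge0 exprn_ge0 // ltW.
have cb0 : 0 <= b ^- 2 by rewrite invr_ge0 exprn_ge0 // ltW.
have froE : forall M : 'M[R]_d, fro M = Num.sqrt (fro2 M) by [].
have hD : I1 *m H *m I2 = I2 - I1.
  rewrite /H mulmxBr mulmxBl /I1 mulVmx // mul1mx -mulmxA mulmxV // mulmx1.
  done.
have hDs : (I1 - I2)^T = I1 - I2 by rewrite linearB /= sI1 sI2.
have DE : I1 - I2 = - (I1 *m H *m I2) by rewrite hD opprB.
have fH0 := fro2_ge0 H.
have fD_ub : fro2 (I1 - I2) <= a ^- 2 * a ^- 2 * fro2 H.
  by rewrite DE fro2_opp; apply: fro2_sand.
have fD_lb : b ^- 2 * b ^- 2 * fro2 H <= fro2 (I1 - I2).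
  by rewrite DE fro2_opp; apply: fro2_sand_ge.
have [HnD1 HnD2] := Hn _ hDs.
split.
- apply: le_trans HnD1; rewrite lee_fin /alpha -mulrA ler_wpM2l ?(ltW cF0) //.
  rewrite !froE; apply: sqrt_ge_mul => //.
- apply: (le_trans HnD2); rewrite lee_fin /beta -mulrA ler_wpM2l ?(ltW CF0) //.
  rewrite !froE; apply: sqrt_le_mul => //.
- have sH : H^T = H by rewrite /H linearB /= s1 s2.
  have E_eq : invmx Th1 - invmx Th2 - Dinv Th2 (Th1 - Th2) = I1 *m (H *m I2 *m H) *m I2.
    rewrite /Dinv opprK -/I1 -/I2 -/H DE addrC.
    have e1 : (I2 - I1) *m H *m I2 = I2 *m H *m I2 - I1 *m H *m I2 by rewrite !mulmxBl.
    by rewrite -e1 -hD !mulmxA.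
  have Es : (invmx Th1 - invmx Th2 - Dinv Th2 (Th1 - Th2))^T =
             invmx Th1 - invmx Th2 - Dinv Th2 (Th1 - Th2).
    rewrite /Dinv; apply: sym_sub; first exact: sym_sub.
    by apply: sym_opp; apply: sym_sand.
  apply: (le_trans (Hn _ Es).2); rewrite lee_fin E_eq.
  have t : fro2 (I1 *m (H *m I2 *m H) *m I2) <= a ^- 2 * a ^- 2 * (a ^- 2 * fro2 H * fro2 H).
    apply: le_trans (fro2_sand _ sI1 ca0 ub1 ub2) _.
    apply: (ler_wpM2l (mulr_ge0 ca0 ca0)).
    apply: le_trans (fro2_mul _ _) _.
    apply: (ler_wpM2r fH0); exact: fro2_mulr ub2.
  have an0 : a != 0 by rewrite gt_eqF.
  have ar : a ^- 2 * a ^- 2 * (a ^- 2 * fro2 H * fro2 H) = (a ^- 3) ^+ 2 * (fro2 H ^+ 2).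
    by field.
  rewrite ar in t.
  have fsq : fro (Th1 - Th2) ^+ 2 = fro2 H by rewrite froE sqr_sqrtr.
  rewrite fsq /L -mulrA; apply: (ler_wpM2l (ltW CF0)).
  rewrite froE -[X in _ * X](ger0_norm fH0) -sqrtr_sqr.
  apply: sqrt_le_mul => //; first by rewrite invr_ge0 exprn_ge0 // ltW.
  exact: sqr_ge0.
- have an0 : a != 0 by rewrite gt_eqF.
  apply: ge_ereal_sup => x [H' [sH' fH'] <-].
  rewrite /symmx in sH'.
  have G_eq : Dinv Th1 H' - Dinv Th2 H' =
      I1 *m (H *m I2 *m H') *m I2 + I1 *m (H' *m I1 *m H) *m I2.
    rewrite /Dinv -/I1 -/I2 opprK addrC.
    have e1 : (I2 - I1) *m H' *m I2 = I2 *m H' *m I2 - I1 *m H' *m I2 by rewrite !mulmxBl.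
    have e2 : I1 *m H' *m (I2 - I1) = I1 *m H' *m I2 - I1 *m H' *m I1 by rewrite mulmxBr.
    have -> : I2 *m H' *m I2 - I1 *m H' *m I1 = (I2 - I1) *m H' *m I2 + I1 *m H' *m (I2 - I1).
      by rewrite e1 e2 addrA subrK.
    by rewrite -hD !mulmxA.
  have Gs : (Dinv Th1 H' - Dinv Th2 H')^T = Dinv Th1 H' - Dinv Th2 H'.
    by rewrite /Dinv; apply: sym_sub; apply: sym_opp; apply: sym_sand.
  apply: (le_trans (Hn _ Gs).2); rewrite lee_fin G_eq.
  have fH'0 := fro2_ge0 H'.
  have fH'1 : fro2 H' <= 1.
    have -> : fro2 H' = fro H' ^+ 2 by rewrite froE sqr_sqrtr.
    by apply: exprn_ile1 => //; rewrite froE sqrtr_ge0.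
  have t1 : fro2 (I1 *m (H *m I2 *m H') *m I2) <= a ^- 2 * a ^- 2 * (a ^- 2 * fro2 H * fro2 H').
    apply: le_trans (fro2_sand _ sI1 ca0 ub1 ub2) _.
    apply: (ler_wpM2l (mulr_ge0 ca0 ca0)).
    apply: le_trans (fro2_mul _ _) _.
    apply: (ler_wpM2r fH'0); exact: fro2_mulr ub2.
  have t2 : fro2 (I1 *m (H' *m I1 *m H) *m I2) <= a ^- 2 * a ^- 2 * (a ^- 2 * fro2 H' * fro2 H).
    apply: le_trans (fro2_sand _ sI1 ca0 ub1 ub2) _.
    apply: (ler_wpM2l (mulr_ge0 ca0 ca0)).
    apply: le_trans (fro2_mul _ _) _.
    apply: (ler_wpM2r fH0); exact: fro2_mulr ub1.
  have tG := fro2_add (I1 *m (H *m I2 *m H') *m I2) (I1 *m (H' *m I1 *m H) *m I2).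
  have c0 : 0 <= a ^- 2 * a ^- 2 * a ^- 2 by rewrite !mulr_ge0.
  have tG' : fro2 (I1 *m (H *m I2 *m H') *m I2 + I1 *m (H' *m I1 *m H) *m I2)
      <= (2 * a ^- 3) ^+ 2 * fro2 H.
    apply: (le_trans tG).
    have ar : (2 * a ^- 3) ^+ 2 * fro2 H =
       2 * (a ^- 2 * a ^- 2 * (a ^- 2 * fro2 H * 1)) +
       2 * (a ^- 2 * a ^- 2 * (a ^- 2 * 1 * fro2 H)) by field.
    rewrite ar; apply: lerD; apply: (ler_wpM2l (ler0n _ 2)).
      apply: (le_trans t1); apply: (ler_wpM2l (mulr_ge0 ca0 ca0)).
      by apply: (ler_wpM2l (mulr_ge0 ca0 fH0)).
    apply: (le_trans t2); apply: (ler_wpM2l (mulr_ge0 ca0 ca0)).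
    by apply: (ler_wpM2r fH0); apply: (ler_wpM2l ca0).
  rewrite /zeta /L mulrA [2 * CF]mulrC -!mulrA; apply: (ler_wpM2l (ltW CF0)).
  rewrite mulrA !froE; apply: sqrt_le_mul => //.
  by rewrite mulr_ge0 // invr_ge0 exprn_ge0 // ltW.
Qed.
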